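(* Let $p>1$, $1/p+1/q=1$, let $\{(x_i,y_i)\}_{i=1}^n\subset\mathbb{R}^d\times\{\pm1\}$ be linearly separable with $\max_i\|x_i\|_q<C$, and let $L(w)=\frac1n\sum_i\ell(y_i\langle w,x_i\rangle)$ with $\ell$ decreasing, convex, not attaining its minimum, $\inf\ell=0$. If the regularized direction $\bar w^{\mathrm{reg}}_p$ exists, then for every $\alpha>0$ there exists $r_\alpha$ such that for every $w\in\mathbb{R}^d$ with $\|w\|_p>r_\alpha$, $$L\big((1+\alpha)\|w\|_p\,\bar w^{\mathrm{reg}}_p\big)\le L(w).$$
   Context: The regularization path is $\bar w_p(B)=\arg\min_{\|w\|_p\le B}L(w)$ for $B>0$; if $\lim_{B\to\infty}\bar w_p(B)/B$ exists it is called the regularized direction $\bar w^{\mathrm{reg}}_p$. *)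

(* Defs.v *)
From HB Require Import structures.
From mathcomp Require Import all_boot all_order all_algebra.
From mathcomp Require Import all_classical all_reals all_analysis.
Set Implicit Arguments. Unset Strict Implicit. Unset Printing Implicit Defensive.
Import Order.TTheory GRing.Theory Num.Theory.
Import numFieldNormedType.Exports.
Local Open Scope ring_scope.
Local Open Scope classical_set_scope.

Definition pnorm (R : realType) (d : nat) (p : R) (w : 'rV[R]_d) : R :=
  (\sum_(i < d) `|w 0 i| `^ p) `^ (p^-1).

Definition dotp (R : realType) (d : nat) (w x : 'rV[R]_d) : R :=
  \sum_(i < d) w 0 i * x 0 i.

Definition emp_loss (R : realType) (d n : nat) (l : R -> R)
    (x : 'I_n -> 'rV[R]_d) (y : 'I_n -> R) (w : 'rV[R]_d) : R :=
  n%:R^-1 * \sum_(i < n) l (y i * dotp w (x i)).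

Definition is_reg_path_point (R : realType) (d : nat) (p : R)
    (L : 'rV[R]_d -> R) (B : R) (wB : 'rV[R]_d) : Prop :=
  pnorm p wB <= B /\ forall w, pnorm p w <= B -> L wB <= L w.

Definition is_reg_path (R : realType) (d : nat) (p : R)
    (L : 'rV[R]_d -> R) (wbar : R -> 'rV[R]_d) : Prop :=
  forall B : R, 0 < B -> is_reg_path_point p L B (wbar B).

Definition is_reg_direction (R : realType) (d : nat) (wbar : R -> 'rV[R]_d)
    (u : 'rV[R]_d) : Prop :=
  (fun B : R => B^-1 *: wbar B) @ +oo --> u.

Definition linearly_separable (R : realType) (d n : nat)
    (x : 'I_n -> 'rV[R]_d) (y : 'I_n -> R) : Prop :=
  exists w : 'rV[R]_d, forall i, 0 < y i * dotp w (x i).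

Definition convex_fun (R : realType) (l : R -> R) : Prop :=
  forall (a b t : R), 0 <= t <= 1 ->
    l (t * a + (1 - t) * b) <= t * l a + (1 - t) * l b.

(* Main.v *)
Require Import Defs.
From HB Require Import structures.
From mathcomp Require Import all_boot all_order all_algebra.
From mathcomp Require Import all_classical all_reals all_analysis.
From mathcomp Require Import ring lra.
Import Order.TTheory GRing.Theory Num.Theory.
Import numFieldNormedType.Exports.
Local Open Scope ring_scope.
Local Open Scope classical_set_scope.

Lemma powR_conv {R : realType} {p t a b : R} : 1 <= p -> 0 <= t -> t <= 1 ->
  0 <= a -> 0 <= b ->
  (t * a + (1 - t) * b) `^ p <= t * a `^ p + (1 - t) * b `^ p.
Proof.
move=> p1 t0 t1 a0 b0.
have := convex_powR p1 (Itv01 t0 t1).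
move=> /(_ a b); rewrite !inE /= !in_itv /= !andbT => /(_ a0 b0).
by rewrite !convRE.
Qed.

Section L.
Variable R : realType.
Variable l : R -> R.
Hypothesis ldec : forall a b : R, a < b -> l b < l a.
Hypothesis lcvx : convex_fun l.
Hypothesis lge0 : forall a, 0 <= l a.
Hypothesis linf : forall e : R, 0 < e -> exists a : R, l a < e.

Lemma lnoninc a b : a <= b -> l b <= l a.
Proof.
rewrite le_eqVlt => /orP[/eqP->//|/ldec/ltW//].
Qed.

Lemma lslope a b h : a <= b -> 0 <= h -> l (a + h) + l b <= l a + l (b + h).
Proof.
move=> ab h0.
have [->|hn0] := eqVneq h 0; first by rewrite !addr0 addrC.
have hp : 0 < h by rewrite lt_neqAle eq_sym hn0.
set s := b - a + h.
have sp : 0 < s by rewrite /s; lra.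
set t := (b - a) / s.
have t0 : 0 <= t by rewrite /t divr_ge0 //; lra.
have t1 : t <= 1 by rewrite /t ler_pdivrMr // mul1r /s; lra.
have E1 : t * a + (1 - t) * (b + h) = a + h.
  rewrite /t /s; field; rewrite /s in sp; lra.
have E2 : (1 - t) * a + (1 - (1 - t)) * (b + h) = b.
  rewrite /t /s; field; rewrite /s in sp; lra.
have H1 := lcvx a (b + h) t; rewrite E1 in H1.
have H2 := lcvx a (b + h) (1 - t); rewrite E2 in H2.
have := H1 ltac:(rewrite t0 t1 //).
have := H2 ltac:(apply/andP; split; lra).
lra.
Qed.


Lemma tele_ident (g : nat -> R) (N T : nat) :
  \sum_(k < T) (g k - g (k + N)%N) = \sum_(k < N) g k - \sum_(k < N) g (k + T)%N.
Proof.
elim: T => [|T IH].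
  rewrite big_ord0; under [X in _ - X]eq_bigr do rewrite addn0; by rewrite subrr.
rewrite big_ord_recr /= IH.
have E : \sum_(k < N) g (k + T.+1)%N = \sum_(k < N) g (k + T)%N + g (N + T)%N - g T.
  have E1 := @big_ord_recl R 0 +%R N (fun k : 'I_N.+1 => g (k + T)%N).
  have E2 := @big_ord_recr R 0 +%R N (fun k : 'I_N.+1 => g (k + T)%N).
  simpl in E1, E2.
  have E3 : \sum_(i < N) g (bump 0 i + T)%N = \sum_(k < N) g (k + T.+1)%N.
    by apply: eq_bigr => i _; rewrite /bump /= add1n addnS.
  rewrite -E3; rewrite add0n in E1; rewrite E2 in E1; lra.
rewrite E addnC; ring.
Qed.

Lemma no_flat (n : nat) (eta kap B0 : R) : 0 < eta -> eta <= kap ->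
  (forall B, B0 <= B -> 0 < B ->
     l (eta / 2^+n.+1 * B) - l (eta * B) <= n%:R * (l (kap * B) - l (2 * kap * B))) -> False.
Proof.
move=> eta0 etakap H.
set N := n.+1; set e := eta / 2^+N; set c := Num.max B0 1.
have c1 : 1 <= c by rewrite le_max lexx orbT.
have c0 : 0 < c by lra.
have cB0 : B0 <= c by rewrite le_max lexx.
have e0 : 0 < e by rewrite /e divr_gt0 // exprn_gt0.
have pow1 : forall k, 1 <= (2:R)^+k by move=> k; rewrite exprn_ege1 //; lra.
set g := fun k => l (e * (c * 2^+k)).
set h := fun k => l (kap * (c * 2^+k)).
have step : forall k, g k - g (k + N)%N <= n%:R * (h k - h k.+1).
  move=> k; rewrite /g /h.
  have -> : e * (c * 2 ^+ (k + N)) = eta * (c * 2^+k).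
    rewrite /e exprD; field; rewrite expf_neq0 //; lra.
  have -> : kap * (c * 2 ^+ k.+1) = 2 * kap * (c * 2^+k) by rewrite exprS; ring.
  apply: H.
    by apply: (le_trans cB0); rewrite ler_peMr //; lra.
  by rewrite mulr_gt0 // exprn_gt0.
have sum : forall T, \sum_(k < T) (g k - g (k + N)%N) <= n%:R * (h 0%N - h T).
  elim=> [|T IH]; first by rewrite big_ord0 subrr mulr0.
  rewrite big_ord_recr /=.
  have := step T; have := IH; lra.
have p2 : forall m k, (m <= k)%N -> (2:R)^+m <= 2^+k.
  by move=> m k mk; apply: ler_weXn2l => //; lra.
have h0p : 0 < h 0%N.
  rewrite /h; apply: (le_lt_trans (lge0 (kap * (c * 2^+0) + 1))).
  by apply: ldec; lra.
have gk_ge : forall k, (k < N)%N -> h 0%N <= g k.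
  move=> k kN; rewrite /g /h; apply: lnoninc.
  rewrite expr0 mulr1.
  have -> : e * (c * 2^+k) = c * (e * 2^+k) by ring.
  rewrite [kap * c]mulrC ler_pM2l //; apply: (@le_trans _ _ eta) => //.
  rewrite /e mulrAC ler_pdivrMr ?exprn_gt0 // ler_pM2l //.
  by apply: p2; apply: ltnW.
have gT_le : forall T k, g (k + T)%N <= g T.
  move=> T k; rewrite /g; apply: lnoninc; rewrite ler_pM2l // ler_pM2l //.
  by apply: p2; apply: leq_addl.
have [a ha] := linf (h 0%N / N%:R) (divr_gt0 h0p (ltr0Sn _ _)).
set T := (Num.truncn (a / (e * c))).+1.
have Tpow : (T%:R : R) <= 2^+T.
  elim: T => [|k IH]; first by rewrite expr0 ler01.
  by rewrite exprS -natr1; have := pow1 k; lra.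
have aT : a <= e * (c * 2^+T).
  have := truncnS_gt (a / (e * c)); rewrite -/T => aT.
  rewrite mulrA -ler_pdivrMl; last by rewrite mulr_gt0.
  by rewrite mulrC; apply: ltW; apply: (lt_le_trans aT).
have gT : g T < h 0%N / N%:R by apply: (le_lt_trans _ ha); apply: lnoninc.
have S1 : N%:R * h 0%N <= \sum_(k < N) g k.
  apply: (@le_trans _ _ (\sum_(k < N) h 0%N)).
    by rewrite sumr_const card_ord mulr_natl.
  by apply: ler_sum => k _; apply: gk_ge.
have S2 : \sum_(k < N) g (k + T)%N <= N%:R * g T.
  apply: (@le_trans _ _ (\sum_(k < N) g T)).
    by apply: ler_sum => k _; apply: gT_le.
  by rewrite sumr_const card_ord mulr_natl.
have := sum T; rewrite tele_ident => S3.
have hT : 0 <= h T := lge0 _.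
have gT' : N%:R * g T < h 0%N by rewrite mulrC -ltr_pdivlMr // ltr0Sn.
have NS : (N%:R : R) = n%:R + 1 by rewrite /N -natr1.
rewrite NS in S1 S2 gT'.
have nn : (0 : R) <= n%:R by [].
nra.
Qed.

End L.

Lemma lin4 {R : realType} (a b c d e f : R) :
  a + b <= c + d -> e <= a -> d <= f -> b - f <= c - e.
Proof. lra. Qed.

Lemma lin2 {R : realType} (X a b : R) : 0 <= X -> b <= a -> - X <= a - b.
Proof. lra. Qed.
Lemma lin5 {R : realType} (a b c m : R) : 0 <= a -> b <= c -> m - c <= a + m - b.
Proof. lra. Qed.
Lemma lin6 {R : realType} (a b c d e : R) : a + b <= c + d -> e <= b -> - (c - a) <= d - e.
Proof. lra. Qed.
Lemma lin7 {R : realType} (eps dl mu : R) : eps <= dl / 2 -> dl <= mu -> 2 * (dl / 4) <= mu - eps.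
Proof. lra. Qed.
Lemma lin8 {R : realType} (eps mu K : R) : eps <= 1 -> mu <= `|mu| -> `|mu| + 1 <= K -> mu + eps <= K.
Proof. lra. Qed.

Lemma lin9 {R : realType} (Y a s1 s2 T X nX : R) : Y <= a -> s1 <= s2 -> T = - X + s1 ->
  T = - nX -> 0 <= X -> Y - nX <= a + s2.
Proof. lra. Qed.
Lemma lin10 {R : realType} (Y nX a b : R) : Y - nX <= a - b -> a <= b -> Y <= nX.
Proof. lra. Qed.

Lemma lin11 {R : realType} (a mu eps : R) : a - mu <= eps -> a <= mu + eps.
Proof. lra. Qed.
Lemma lin12 {R : realType} (eps alpha mu : R) : eps <= alpha * mu -> mu + eps <= (1 + alpha) * mu.
Proof. move=> h; rewrite mulrDl mul1r; lra. Qed.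

Lemma lin13 {R : realType} (x e : R) : e <= x / 2 -> x / 2 <= x - e.
Proof. lra. Qed.

Section P.
Variable R : realType.
Variable d : nat.
Variable p : R.
Hypothesis p1 : 1 < p.

Definition S (w : 'rV[R]_d) : R := \sum_(j < d) `|w 0 j| `^ p.

Lemma S_ge0 w : 0 <= S w.
Proof. by apply: sumr_ge0 => j _; apply: powR_ge0. Qed.

Lemma pnorm_le w B : 0 <= B -> (pnorm p w <= B) <-> (S w <= B `^ p).
Proof.
move=> B0; have p0 : 0 < p by apply: lt_trans p1.
have pn : pnorm p w = S w `^ p^-1 by [].
split => H.
- have -> : S w = (pnorm p w) `^ p by rewrite pn -powRrM mulVf ?gt_eqF // powRr1 // S_ge0.
  by apply: ge0_ler_powR => //; [exact: ltW | rewrite nnegrE powR_ge0].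
- rewrite pn; have -> : B = (B `^ p) `^ p^-1 by rewrite -powRrM mulfV ?gt_eqF // powRr1.
  apply: ge0_ler_powR => //; first by rewrite invr_ge0 ltW.
  + by rewrite nnegrE S_ge0.
  + by rewrite nnegrE powR_ge0.
Qed.

Lemma S_scale c w : S (c *: w) = `|c| `^ p * S w.
Proof.
rewrite /S mulr_sumr; apply: eq_bigr => j _.
by rewrite mxE normrM powRM.
Qed.

Lemma S_conv t a b : 0 <= t -> t <= 1 ->
  S (t *: a + (1 - t) *: b) <= t * S a + (1 - t) * S b.
Proof.
move=> t0 t1; rewrite /S !mulr_sumr -big_split /=; apply: ler_sum => j _.
rewrite !mxE.
apply: (le_trans _ (powR_conv (ltW p1) t0 t1 (normr_ge0 (a 0 j)) (normr_ge0 (b 0 j)))).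
apply: ge0_ler_powR; first by apply: ltW; apply: lt_trans p1.
- by rewrite nnegrE.
- by rewrite nnegrE addr_ge0 // mulr_ge0 //; lra.
have t1p : 0 <= 1 - t by lra.
by apply: (le_trans (ler_normD _ _)); rewrite !normrM (ger0_norm t0) (ger0_norm t1p).
Qed.

End P.

Lemma dotpD (R : realType) d (a b z : 'rV[R]_d) : dotp (a + b) z = dotp a z + dotp b z.
Proof. by rewrite /dotp -big_split; apply: eq_bigr => j _; rewrite mxE mulrDl. Qed.

Lemma dotpZ (R : realType) d (c : R) (a z : 'rV[R]_d) : dotp (c *: a) z = c * dotp a z.
Proof. by rewrite /dotp mulr_sumr; apply: eq_bigr => j _; rewrite mxE mulrA. Qed.

Lemma entry_le (R : realType) d (A : 'rV[R]_d) j : `|A 0 j| <= `|A|.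
Proof.
by rewrite [leRHS]/Num.norm /= mx_normrE; apply/bigmax_geP; right => /=; exists (ord0, j).
Qed.

Lemma lower_bound (R : realType) n (f : 'I_n -> R) :
  exists c, [/\ 0 < c, c <= 1 & forall i, 0 < f i -> c <= f i].
Proof.
set s := \sum_(i < n) (if 0 < f i then (f i)^-1 else 0).
have s0 : 0 <= s by apply: sumr_ge0 => i _; case: ifP => // /ltW; rewrite invr_ge0.
exists (1 + s)^-1; split.
- by rewrite invr_gt0; lra.
- by rewrite invf_le1; lra.
move=> i fi.
have : (f i)^-1 <= 1 + s.
  rewrite /s (bigD1 i) //= fi.
  have : 0 <= \sum_(j < n | j != i) (if 0 < f j then (f j)^-1 else 0).
    by apply: sumr_ge0 => j _; case: ifP => // /ltW; rewrite invr_ge0.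
  lra.
by rewrite -(invrK (f i)) lef_pV2 ?posrE ?invr_gt0 //; lra.
Qed.

Lemma term_le_sum (R : realType) n (f : 'I_n -> R) i :
  (forall j, 0 <= f j) -> f i <= \sum_(j < n) f j.
Proof.
move=> f0; rewrite (bigD1 i) //= lerDl; by apply: sumr_ge0.
Qed.

Lemma conv_margin (R : realType) d n (x : 'I_n -> 'rV[R]_d) (y : 'I_n -> R)
  (wbar : R -> 'rV[R]_d) (u : 'rV[R]_d) :
  (forall i, y i = 1 \/ y i = -1) -> is_reg_direction wbar u ->
  forall e, 0 < e -> exists B0, forall B, B0 <= B -> forall i,
   `|y i * dotp (B^-1 *: wbar B) (x i) - y i * dotp u (x i)| <= e.
Proof.
move=> hy hc e e0.
set Cx := 1 + \sum_(i < n) \sum_(j < d) `|x i 0 j|.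
have Cx1 : 1 <= Cx.
  rewrite /Cx lerDl; apply: sumr_ge0 => i _; apply: sumr_ge0 => j _; exact: normr_ge0.
have Cx0 : 0 < Cx by lra.
move/cvgrPdist_lt: hc => /(_ (e / Cx) (divr_gt0 e0 Cx0)) [M [Mr HM]].
exists (M + 1) => B MB i.
have := HM B ltac:(lra) => /= Hlt.
set v := B^-1 *: wbar B.
rewrite -mulrBr normrM.
have -> : `|y i| = 1 by case: (hy i) => ->; rewrite ?normrN normr1.
rewrite mul1r /dotp -sumrB.
apply: (le_trans (ler_norm_sum _ _ _)).
apply: (@le_trans _ _ (\sum_(j < d) e / Cx * `|x i 0 j|)).
  apply: ler_sum => j _; rewrite -mulrBl normrM ler_wpM2r //.
  apply: ltW; apply: le_lt_trans Hlt.
  have := @entry_le R d (u - v) j; rewrite !mxE => H; rewrite distrC; exact: H.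
rewrite -mulr_sumr mulrAC ler_pdivrMr // ler_wpM2l //; first exact: ltW.
have T := @term_le_sum R n (fun i => \sum_(j < d) `|x i 0 j|) i
  (fun k => sumr_ge0 _ (fun j _ => normr_ge0 _)).
simpl in T; rewrite /Cx; lra.
Qed.

Lemma u_sep (R : realType) (d n : nat) (p : R)
  (x : 'I_n -> 'rV[R]_d) (y : 'I_n -> R) (l : R -> R)
  (wbar : R -> 'rV[R]_d) (u : 'rV[R]_d) :
  1 < p -> (0 < n)%N ->
  (forall i, y i = 1 \/ y i = -1) ->
  linearly_separable x y ->
  (forall a b : R, a < b -> l b < l a) ->
  convex_fun l ->
  (forall a : R, 0 <= l a) ->
  (forall e : R, 0 < e -> exists a : R, l a < e) ->
  is_reg_path p (emp_loss l x y) wbar ->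
  is_reg_direction wbar u ->
  forall i, 0 < y i * dotp u (x i).
Proof.
move=> p1 n0 hy [w0 hw0] ldec lcvx lge0 linf hpath hdir i0.
rewrite ltNge; apply/negP => hi0.
pose m := fun i (w : 'rV[R]_d) => y i * dotp w (x i).
have mD : forall i a b, m i (a + b) = m i a + m i b.
  by move=> i a b; rewrite /m dotpD mulrDr.
have mZ : forall i c a, m i (c *: a) = c * m i a.
  by move=> i c a; rewrite /m dotpZ mulrCA.
have [c0 [c00 _ hc0]] := @lower_bound R n (fun i => m i w0).
have hc0' : forall i, c0 <= m i w0 := fun i => hc0 i (hw0 i).
have Sw0 : 0 < S R d p w0.
  have [j hj] : exists j, w0 0 j != 0.
    case: (pickP (fun j => w0 0 j != 0)) => [j hj|H]; first by exists j.
    exfalso; have := hw0 i0.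
    have -> : dotp w0 (x i0) = 0.
      by rewrite /dotp big1 // => j _; have := H j => /= /negbFE/eqP ->; rewrite mul0r.
    by rewrite mulr0 ltxx.
  rewrite /S (bigD1 j) //=.
  have : 0 < `|w0 0 j| `^ p by apply: powR_gt0; rewrite normr_gt0.
  have : 0 <= \sum_(i < d | i != j) `|w0 0 i| `^ p.
    by apply: sumr_ge0 => k _; apply: powR_ge0.
  lra.
set P0 := pnorm p w0.
have P0p : 0 < P0 by apply: powR_gt0.
have p0 : 0 < p by apply: lt_trans p1.
have SP0 : S R d p w0 = P0 `^ p.
  by rewrite /P0 /pnorm -powRrM mulVf ?gt_eqF // powRr1 // (@S_ge0 R d p w0).
set wh := P0^-1 *: w0.
have Swh : S R d p wh = 1.
  rewrite /wh (@S_scale R d p) SP0 ger0_norm ?invr_ge0 ?ltW //.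
  rewrite -(@powRM _ P0^-1 P0) ?invr_ge0 ?ltW // mulVf ?gt_eqF //.
  by rewrite powR1.
set g := c0 / P0.
have g0 : 0 < g by apply: divr_gt0.
have mwh : forall i, g <= m i wh.
  move=> i; rewrite /wh mZ /g mulrC ler_pM2l ?invr_gt0 //.
have [dl [dl0 dl1 hdl]] := @lower_bound R n (fun i => m i u).
set K := 1 + \sum_(i < n) `|m i u| + g.
have Ku : forall i, `|m i u| + 1 <= K.
  move=> i; have := @term_le_sum R n (fun i => `|m i u|) i (fun k => normr_ge0 _).
  rewrite /K /=; lra.
have K1 : 1 <= K by have := Ku i0; have := normr_ge0 (m i0 u); lra.
have gK : g <= K.
  have : 0 <= \sum_(i < n) `|m i u| by apply: sumr_ge0 => k _; exact: normr_ge0.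
  rewrite /K; lra.
have K0 : 0 < K by lra.
set t := dl / (4 * K).
have t0 : 0 < t by rewrite /t divr_gt0 //; lra.
set kap := dl / 4.
have tK : t * K = kap by rewrite /t /kap; field; lra.
have t1 : t <= 1.
  have : t * 1 <= t * K by rewrite ler_pM2l.
  rewrite /kap in tK; lra.
set eta := t * g / 2.
have eta0 : 0 < eta by rewrite /eta divr_gt0 // mulr_gt0.
have tg : t * g <= t * K by rewrite ler_pM2l.
have tg' : t * g <= g by rewrite -[leRHS]mul1r ler_pM2r.
have etakap : eta <= kap.
  rewrite /eta -tK ler_pdivrMr //; have : 0 <= t * K by rewrite mulr_ge0 //; lra.
  lra.
set eps := eta / 2^+n.+1.
have two1 : 1 <= (2:R)^+n.+1 by rewrite exprn_ege1 //; lra.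
have eps0 : 0 < eps by rewrite /eps divr_gt0 // exprn_gt0.
have epseta : eps <= eta.
  rewrite /eps ler_pdivrMr ?exprn_gt0 //.
  have : eta * 1 <= eta * 2^+n.+1 by rewrite ler_pM2l.
  lra.
have epsg : eps <= g / 2 by rewrite /eta in epseta; lra.
have epsdl : eps <= dl / 2 by rewrite /kap in etakap; lra.
have eps1 : eps <= 1 by lra.
have [B0 hB0] := @conv_margin R d n x y wbar u hy hdir eps eps0.
apply: (@no_flat R l ldec lge0 linf n eta kap B0 eta0 etakap) => B BB0 Bp.
pose M := fun i => m i (wbar B).
have hM : forall i, `|B^-1 * M i - m i u| <= eps.
  by move=> i; have := hB0 B BB0 i; rewrite dotpZ mulrCA.
have Mup : forall i, M i <= B * (m i u + eps).
  move=> i; have := hM i; rewrite ler_norml => /andP[_ H].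
  by rewrite -ler_pdivrMl // mulrC; lra.
have Mlo : forall i, B * (m i u - eps) <= M i.
  move=> i; have := hM i; rewrite ler_norml => /andP[H _].
  by rewrite -ler_pdivlMl // mulrC; lra.
have [hwn hopt] := hpath B Bp.
have SwB : S R d p (wbar B) <= B `^ p := (@pnorm_le R d p p1 (wbar B) B (ltW Bp)).1 hwn.
set z := t *: (B *: wh) + (1 - t) *: wbar B.
have Sz : S R d p z <= B `^ p.
  apply: (le_trans (@S_conv R d p p1 t (B *: wh) (wbar B) (ltW t0) t1)).
  rewrite (@S_scale R d p) Swh mulr1 (ger0_norm (ltW Bp)).
  have : (1 - t) * S R d p (wbar B) <= (1 - t) * B `^ p by rewrite ler_wpM2l //; lra.
  lra.
have hz : pnorm p z <= B := (@pnorm_le R d p p1 z B (ltW Bp)).2 Sz.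
have opt := hopt z hz.
have sumle : \sum_(i < n) l (M i) <= \sum_(i < n) l (m i z).
  by move: opt; rewrite /emp_loss ler_pM2l // invr_gt0 ltr0n.
have mz : forall i, m i z = t * (B * m i wh) + (1 - t) * M i.
  by move=> i; rewrite /z mD !mZ.
set X := l (kap * B) - l (2 * kap * B).
set Y := l (eps * B) - l (eta * B).
have X0 : 0 <= X.
  have : l (2 * kap * B) <= l (kap * B).
    apply: (@lnoninc R l ldec); rewrite ler_pM2r //; lra.
  rewrite /X; lra.
have mzM : forall i, m i u <= 0 -> M i + eta * B <= m i z.
  move=> i hi.
  have Mi : M i <= eps * B.
    apply: (le_trans (Mup i)); rewrite mulrC ler_pM2r //.
    by rewrite -[leRHS]add0r lerD2r.
  have h1 : B * g <= B * m i wh by rewrite ler_pM2l.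
  have h2 : t * (B * g - eps * B) <= t * (B * m i wh - M i).
    by rewrite ler_pM2l // lerB.
  have h3 : t * (B * g / 2) <= t * (B * g - eps * B).
    rewrite ler_pM2l //; have : eps * B <= g / 2 * B by rewrite ler_pM2r.
    have -> : g / 2 * B = B * g / 2 by ring.
    exact: lin13.
  rewrite mz.
  have -> : t * (B * m i wh) + (1 - t) * M i = M i + t * (B * m i wh - M i) by ring.
  have -> : eta * B = t * (B * g / 2) by rewrite /eta; ring.
  rewrite lerD2l; exact: le_trans h3 h2.
have Ti0 : Y <= l (M i0) - l (m i0 z).
  have Mi : M i0 <= eps * B.
    apply: (le_trans (Mup i0)); rewrite mulrC ler_pM2r //.
    by rewrite -[leRHS]add0r lerD2r.
  have etaB : 0 <= eta * B by rewrite mulr_ge0 // ltW.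
  have H1 := @lslope R l lcvx (M i0) (eps * B) (eta * B) Mi etaB.
  have H2 : l (m i0 z) <= l (M i0 + eta * B) by apply: (@lnoninc R l ldec); apply: mzM.
  have H3 : l (eps * B + eta * B) <= l (eta * B).
    apply: (@lnoninc R l ldec); rewrite lerDr mulr_ge0 // ltW //.
  rewrite /Y; clear - H1 H2 H3; lra.
have Ti : forall i, - X <= l (M i) - l (m i z).
  move=> i; case: (lerP (m i u) 0) => hi.
    have H := mzM i hi.
    have etaB : 0 <= eta * B by rewrite mulr_ge0 // ltW.
    have H2 : l (m i z) <= l (M i).
      by apply: (@lnoninc R l ldec); apply: le_trans H; rewrite lerDl.
    clear - X0 H2; lra.
  have dli := hdl i hi.
  have Mlo' : 2 * kap * B <= M i.
    apply: le_trans (Mlo i); rewrite [leRHS]mulrC ler_pM2r //.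
    by rewrite /kap; clear - epsdl dli; lra.
  have Mhi : M i <= B * K.
    apply: (le_trans (Mup i)); rewrite ler_pM2l //.
    have := Ku i; have := ler_norm (m i u); clear - eps1; lra.
  have tM : t * M i <= kap * B.
    have -> : kap * B = t * (B * K) by rewrite -tK; ring.
    by rewrite ler_pM2l.
  have tb : 0 <= t * (B * m i wh).
    apply: mulr_ge0; first exact: ltW.
    apply: mulr_ge0; first exact: ltW.
    exact: le_trans (ltW g0) (mwh i).
  have h2 : M i - kap * B <= m i z.
    rewrite mz.
    have -> : t * (B * m i wh) + (1 - t) * M i = t * (B * m i wh) + M i - t * M i by ring.
    clear - tb tM; lra.
  have kB : 0 <= kap * B.
    apply: mulr_ge0; last exact: ltW.
    by rewrite /kap; apply: divr_ge0; [exact: ltW | ].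
  have kM : kap * B <= M i - kap * B.
    rewrite lerBrDr; have -> : kap * B + kap * B = 2 * kap * B by ring.
    exact: Mlo'.
  have H1 := @lslope R l lcvx (kap * B) (M i - kap * B) (kap * B) kM kB.
  rewrite subrK in H1.
  have E : kap * B + kap * B = 2 * kap * B by ring.
  rewrite E in H1.
  have H2 : l (m i z) <= l (M i - kap * B) by apply: (@lnoninc R l ldec).
  rewrite /X; clear - H1 H2; lra.
have Ssum : Y - n%:R * X <= \sum_(i < n) (l (M i) - l (m i z)).
  rewrite (bigD1 i0) //=.
  have A : \sum_(i < n | i != i0) (- X) <= \sum_(i < n | i != i0) (l (M i) - l (m i z)).
    by apply: ler_sum => i _; exact: Ti.
  have B1 : \sum_(i < n) (- X) = - X + \sum_(i < n | i != i0) (- X) by rewrite (bigD1 i0).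
  have B2 : \sum_(i < n) (- X) = - (n%:R * X).
    by rewrite sumr_const card_ord mulr_natl mulNrn.
  clear - Ti0 A B1 B2 X0; lra.
rewrite sumrB in Ssum.
clear - Ssum sumle; lra.
Qed.

Theorem lemma4 (R : realType) (d n : nat) (p q C : R)
  (x : 'I_n -> 'rV[R]_d) (y : 'I_n -> R) (l : R -> R)
  (wbar : R -> 'rV[R]_d) (u : 'rV[R]_d) :
  1 < p -> p^-1 + q^-1 = 1 ->
  (0 < n)%N ->
  (forall i, y i = 1 \/ y i = -1) ->
  linearly_separable x y ->
  (forall i, pnorm q (x i) < C) ->
  (forall a b : R, a < b -> l b < l a) ->
  convex_fun l ->
  (forall a : R, exists b : R, l b < l a) ->
  (forall a : R, 0 <= l a) ->
  (forall e : R, 0 < e -> exists a : R, l a < e) ->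
  is_reg_path p (emp_loss l x y) wbar ->
  is_reg_direction wbar u ->
  forall alpha : R, 0 < alpha ->
  exists r : R, forall w : 'rV[R]_d, r < pnorm p w ->
    emp_loss l x y (((1 + alpha) * pnorm p w) *: u) <= emp_loss l x y w.
Proof.
move=> p1 pq n0 hy hsep hC ldec lcvx lex lge0 linf hpath hdir alpha a0.
have us := @u_sep R d n p x y l wbar u p1 n0 hy hsep ldec lcvx lge0 linf hpath hdir.
have [dl [dl0 _ hdl]] := @lower_bound R n (fun i => y i * dotp u (x i)).
have hdl' : forall i, dl <= y i * dotp u (x i) := fun i => hdl i (us i).
set eps := alpha * dl.
have eps0 : 0 < eps by rewrite mulr_gt0.
have [B0 hB0] := @conv_margin R d n x y wbar u hy hdir eps eps0.
exists (Num.max B0 0) => w hw.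
set B := pnorm p w.
move: hw; rewrite gt_max => /andP[hB0B Bp].
have [hwn hopt] := hpath B Bp.
apply: le_trans (hopt w (lexx B)).
rewrite /emp_loss ler_wpM2l ?invr_ge0 //; apply: ler_sum => i _.
apply: (@lnoninc R l ldec).
set Mi := y i * dotp (wbar B) (x i).
set mu := y i * dotp u (x i).
rewrite dotpZ.
have -> : y i * ((1 + alpha) * B * dotp u (x i)) = B * ((1 + alpha) * mu) by rewrite /mu; ring.
have Hm := hB0 B (ltW hB0B) i; rewrite dotpZ in Hm.
have E : y i * (B^-1 * dotp (wbar B) (x i)) = B^-1 * Mi by rewrite /Mi; ring.
rewrite E -/mu in Hm.
move: Hm; rewrite ler_norml => /andP[_ H].
have H' : Mi <= B * (mu + eps).
  have -> : Mi = B * (B^-1 * Mi) by rewrite mulrA mulfV ?gt_eqF // mul1r.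
  rewrite ler_pM2l //; clear - H; lra.
apply: (le_trans H'); rewrite ler_pM2l //.
have : eps <= alpha * mu by rewrite ler_pM2l //; exact: hdl'.
move=> h; rewrite mulrDl mul1r; clear - h; lra.
Qed.
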